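(* Let $D>0$, let $(L,\mathbf N)$ be an architecture with $N_0=d$ and width $W=\max_\ell N_\ell$, let $q\in[1,\infty]$, $r\ge1$, $c:=Dd^{1/q}+1$, and let $0<\varepsilon<cL^2(2r)^{L-1}$. Let $0<\eta\le\varepsilon\,(cWL^2(2r)^{L-1})^{-1}$ and let $Q:\Theta_{L,\mathbf N}\to\Theta_{L,\mathbf N}$ satisfy $\|Q(\theta)-\theta\|_\infty\le\eta$ for all $\theta\in\Theta^q_{L,\mathbf N}(r)$. Then $$\max_{\theta\in\Theta^q_{L,\mathbf N}(r)}\ \max_{x\in[-D,D]^d}\|R_\theta(x)-R_{Q(\theta)}(x)\|_q\le\varepsilon.$$
   Context: ReLU $\rho(x)=\max(0,x)$ coordinatewise. Architecture $(L,\mathbf N)$, $\mathbf N=(N_0,\dots,N_L)$; parameters $\theta=(W_1,\dots,W_L,b_1,\dots,b_L)$, $W_\ell\in\mathbb R^{N_\ell\times N_{\ell-1}}$, $b_\ell\in\mathbb R^{N_\ell}$, forming $\Theta_{L,\mathbf N}$; $\|\theta\|_\infty$ = max absolute value of coordinates. Realization: $R_\theta(x)=W_Ly_{L-1}(x)+b_L$, $y_0=x$, $y_\ell=\rho(W_\ell y_{\ell-1}+b_\ell)$, $1\le\ell\le L-1$. $\|M\|_{q\to q}$ is the operator norm induced by $\|\cdot\|_q$. $\Theta^q_{L,\mathbf N}(r)=\{\theta:\|W_\ell\|_{q\to q}\le r,\ \|b_\ell\|_q\le r\ \forall\ell\}$. $d^{1/\infty}:=1$. *)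

(* Defs.v *)
From HB Require Import structures.
From mathcomp Require Import all_boot all_order all_algebra.
From mathcomp Require Import all_classical all_reals all_analysis.
Set Implicit Arguments. Unset Strict Implicit. Unset Printing Implicit Defensive.
Import Order.TTheory GRing.Theory Num.Theory.
Local Open Scope ring_scope.
Local Open Scope classical_set_scope.

Section NN.
Variable R : realType.

Definition qnorm (q : \bar R) (n : nat) (v : 'cV[R]_n) : R :=
  match q with
  | EFin p => (\sum_(i < n) `|v i 0| `^ p) `^ (p^-1)
  | +oo%E => \big[Num.max/0]_(i < n) `|v i 0|
  | -oo%E => 0
  end.

Definition opnorm (q : \bar R) (m n : nat) (M : 'M[R]_(m, n)) : R :=
  sup [set qnorm q (M *m v) | v in [set v : 'cV[R]_n | qnorm q v <= 1]].

Definition pow_inv (d : nat) (q : \bar R) : R :=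
  match q with
  | EFin p => (d%:R) `^ (p^-1)
  | _ => 1
  end.

Definition relu (n : nat) (v : 'cV[R]_n) : 'cV[R]_n := map_mx (fun a => Num.max a 0) v.

Variables (L : nat) (N : nat -> nat).

(* Parameters theta = (W_1..W_L, b_1..b_L): the entry at index l : 'I_L is
   (W_{l+1}, b_{l+1}) with W_{l+1} : N_{l+1} x N_l and b_{l+1} : N_{l+1}. *)
Definition params := forall l : 'I_L, 'M[R]_(N l.+1, N l) * 'cV[R]_(N l.+1).

Definition getW (th : params) (l : nat) : 'M[R]_(N l.+1, N l) :=
  (if (l < L)%N as b return (l < L)%N = b -> 'M[R]_(N l.+1, N l)
   then fun h => (th (Ordinal h)).1 else fun _ => 0) (erefl _).

Definition getb (th : params) (l : nat) : 'cV[R]_(N l.+1) :=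
  (if (l < L)%N as b return (l < L)%N = b -> 'cV[R]_(N l.+1)
   then fun h => (th (Ordinal h)).2 else fun _ => 0) (erefl _).

(* pre k = W_k y_{k-1} + b_k for k >= 1, pre 0 = x;
   y_0 = x, y_k = relu (pre k) for 1 <= k <= L-1. *)
Fixpoint pre (th : params) (x : 'cV[R]_(N 0)) (k : nat) : 'cV[R]_(N k) :=
  match k with
  | 0 => x
  | k'.+1 => getW th k' *m (if k' == 0%N then pre th x k' else relu (pre th x k'))
             + getb th k'
  end.

Definition realization (th : params) (x : 'cV[R]_(N 0)) : 'cV[R]_(N L) := pre th x L.

Definition param_supnorm (th : params) : R :=
  \big[Num.max/0]_(l < L)
    Num.max (\big[Num.max/0]_(i < N l.+1) \big[Num.max/0]_(j < N l) `|(th l).1 i j|)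
            (\big[Num.max/0]_(i < N l.+1) `|(th l).2 i 0|).

Definition param_sub (th th' : params) : params :=
  fun l => ((th l).1 - (th' l).1, (th l).2 - (th' l).2).

Definition ball_params (q : \bar R) (r : R) : set params :=
  [set th | forall l : 'I_L, opnorm q (th l).1 <= r /\ qnorm q (th l).2 <= r].

Definition width : nat := \max_(l < L.+1) N l.

End NN.

(* Main.v *)
Require Import Defs.
From HB Require Import structures.
From mathcomp Require Import all_boot all_order all_algebra.
From mathcomp Require Import all_classical all_reals all_analysis.
From mathcomp Require Import ring lra.
Import Order.TTheory GRing.Theory Num.Theory.
Set Implicit Arguments. Unset Strict Implicit. Unset Printing Implicit Defensive.
Local Open Scope ring_scope.

Section S.
Variable R : realType.
Local Open Scope classical_set_scope.

Definition ext n (v : 'cV[R]_n) (k : nat) : R :=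
  oapp (fun i : 'I_n => v i 0) 0 (insub k).

Lemma extE n (v : 'cV[R]_n) (i : 'I_n) : ext v i = v i 0.
Proof. by rewrite /ext valK. Qed.

Lemma ext_out n (v : 'cV[R]_n) k : (n <= k)%N -> ext v k = 0.
Proof. by move=> h; rewrite /ext insubF // ltnNge h. Qed.

Lemma fin_series n (a : nat -> R) : (forall k, 0 <= a k) ->
  (forall k, (n <= k)%N -> a k = 0) ->
  (\sum_(k <oo) (a k)%:E = (\sum_(k < n) a k)%:E)%E.
Proof.
move=> a0 an.
rewrite (nneseries_split 0 n); last by move=> k; rewrite lee_fin.
rewrite add0n eseries0 ?adde0; last first.
  by move=> k kn _; rewrite an.
by rewrite big_mkord sumEFin.
Qed.

Lemma Lnorm_ext n (v : 'cV[R]_n) (p : R) : 0 < p ->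
  Lnorm counting p%:E (EFin \o ext v) =
  ((\sum_(i < n) `|v i 0| `^ p) `^ p^-1)%:E.
Proof.
move=> p0; rewrite Lnorm_counting //.
under eq_eseriesr => k _ do rewrite /comp /=.
rewrite (@fin_series n (fun k => `|ext v k| `^ p)).
- by rewrite poweR_EFin; congr (_ `^ _)%:E; apply: eq_bigr => i _; rewrite extE.
- by move=> k; rewrite powR_ge0.
- by move=> k kn; rewrite ext_out // normr0 powR0 // gt_eqF.
Qed.


Definition snorm (p : R) n (v : 'cV[R]_n) := (\sum_(i < n) `|v i 0| `^ p) `^ p^-1.

Lemma extD n (u v : 'cV[R]_n) k : ext (u + v) k = ext u k + ext v k.
Proof. by rewrite /ext; case: insubP => [i _ _|_] /=; [rewrite mxE | rewrite addr0]. Qed.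

Lemma snorm_tri n (u v : 'cV[R]_n) (p : R) : 1 <= p ->
  snorm p (u + v) <= snorm p u + snorm p v.
Proof.
move=> p1; have p0 : 0 < p by apply: lt_le_trans p1.
have mf : forall f : nat -> R, measurable_fun setT f by [].
have := @minkowski_EFin _ _ R counting (ext u) (ext v) p (mf _) (mf _) p1.
rewrite (@eq_Lnorm _ _ _ _ _ _ (EFin \o ext (u + v))); last first.
  by move=> k; rewrite /= extD.
by rewrite !Lnorm_ext // -EFinD lee_fin.
Qed.


Lemma snorm1 n (v : 'cV[R]_n) : snorm 1 v = \sum_(i < n) `|v i 0|.
Proof.
rewrite /snorm invr1 powRr1; last by rewrite sumr_ge0 // => i _; rewrite powR_ge0.
by apply: eq_bigr => i _; rewrite powRr1.
Qed.

Lemma snorm_holder n (v : 'cV[R]_n) (p : R) : 1 <= p ->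
  \sum_(i < n) `|v i 0| <= n%:R `^ (1 - p^-1) * snorm p v.
Proof.
move=> p1; have p0 : 0 < p by apply: lt_le_trans p1.
have [<-|pn1] := eqVneq 1 p.
  by rewrite invr1 subrr powRr0 mul1r snorm1.
have {pn1}p1' : 1 < p by rewrite lt_neqAle pn1.
pose q := p / (p - 1).
have q0 : 0 < q by rewrite /q divr_gt0 // subr_gt0.
have qi : q^-1 = 1 - p^-1.
  by rewrite /q invf_div mulrBl divff ?gt_eqF // mul1r.
have pq : p^-1 + q^-1 = 1 by rewrite qi addrC subrK.
have mf : forall f : nat -> R, measurable_fun setT f by [].
pose one : 'cV[R]_n := const_mx 1.
have := @hoelder _ _ R counting (ext v) (ext one) p q (mf _) (mf _) p0 q0 pq.
rewrite (@eq_Lnorm _ _ _ _ _ _ (EFin \o ext v)); last first.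
  move=> k; rewrite /= /ext; case: insubP => [i _ _|_] /=; last by rewrite mulr0.
  by rewrite mxE mulr1.
rewrite (Lnorm_ext _ ltr01) (Lnorm_ext _ p0) (Lnorm_ext _ q0) -EFinM lee_fin.
have -> : (\sum_(i < n) `|v i 0| `^ 1) `^ 1^-1 = \sum_(i < n) `|v i 0|.
  by have := snorm1 v; rewrite /snorm.
move=> /le_trans; apply.
rewrite mulrC; apply: ler_wpM2r.
  by rewrite powR_ge0.
rewrite qi; rewrite le_eqVlt; apply/orP; left; apply/eqP; congr (_ `^ _).
under eq_bigr do rewrite mxE normr1 powR1.
by rewrite sumr_const card_ord.
Qed.


Lemma powR_mono (r x y : R) : 0 <= r -> 0 <= x -> x <= y -> x `^ r <= y `^ r.
Proof.
move=> r0 x0 xy; apply: (ge0_ler_powR r0); rewrite ?nnegrE //.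
exact: le_trans xy.
Qed.

Lemma sumpow_ge0 n (F : 'I_n -> R) (p : R) : 0 <= \sum_(i < n) F i `^ p.
Proof. by rewrite sumr_ge0 // => i _; rewrite powR_ge0. Qed.

Lemma bmax_ge0 n (F : 'I_n -> R) : 0 <= \big[Num.max/0]_(i < n) `|F i|.
Proof. by elim/big_ind: _ => // x y hx hy; rewrite le_max hx. Qed.

Lemma bmax_le n (F : 'I_n -> R) B : 0 <= B -> (forall i, `|F i| <= B) ->
  \big[Num.max/0]_(i < n) `|F i| <= B.
Proof. by move=> B0 h; apply: bigmax_le. Qed.

Lemma le_bmax n (F : 'I_n -> R) i : `|F i| <= \big[Num.max/0]_(i < n) `|F i|.
Proof. exact: (le_bigmax _ (fun i => `|F i|) i). Qed.

Lemma cmax_ge0 n (v : 'cV[R]_n) : 0 <= \big[Num.max/0]_(i < n) `|v i 0|.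
Proof. exact: (bmax_ge0 (fun i => v i 0)). Qed.

Lemma le_cmax n (v : 'cV[R]_n) i : `|v i 0| <= \big[Num.max/0]_(i < n) `|v i 0|.
Proof. exact: (le_bmax (fun i => v i 0)). Qed.

Lemma qcase (q : \bar R) : (1 <= q)%E -> q = +oo%E \/ exists p, q = p%:E /\ 1 <= p.
Proof. by case: q => [p|_|] //; [right; exists p | left]. Qed.

Lemma qn_ge0 q n (v : 'cV[R]_n) : 0 <= qnorm q v.
Proof. by case: q => [p||] /=; rewrite ?powR_ge0 ?bmax_ge0. Qed.

Lemma qn_mono q n (u v : 'cV[R]_n) : (1 <= q)%E ->
  (forall i, `|u i 0| <= `|v i 0|) -> qnorm q u <= qnorm q v.
Proof.
move=> /qcase [->|[p [-> p1]]] h /=.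
  apply: bigmax_le; first exact: (bmax_ge0 (fun i => v i 0)).
  by move=> i _; apply: le_trans (h i) _; exact: (le_bmax (fun i => v i 0)).
have p0 : 0 < p by apply: lt_le_trans p1.
apply: powR_mono; [by rewrite invr_ge0 ltW | exact: sumpow_ge0 |].
by apply: ler_sum => i _; apply: powR_mono; rewrite // ltW.
Qed.

Lemma qn_tri q n (u v : 'cV[R]_n) : (1 <= q)%E ->
  qnorm q (u + v) <= qnorm q u + qnorm q v.
Proof.
move=> /qcase [->|[p [-> p1]]] /=; last exact: snorm_tri.
apply: bigmax_le; first by rewrite addr_ge0 ?cmax_ge0.
move=> i _; rewrite mxE; apply: le_trans (ler_normD _ _) _.
by apply: lerD; apply: le_cmax.
Qed.

Lemma qn_coord q n (v : 'cV[R]_n) i : (1 <= q)%E -> `|v i 0| <= qnorm q v.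
Proof.
move=> /qcase [->|[p [-> p1]]] /=; first exact: (le_bmax (fun i => v i 0)).
have p0 : 0 < p by apply: lt_le_trans p1.
rewrite -{1}(@powRr1 _ `|v i 0|) // -(@mulfV _ p) ?gt_eqF // powRrM.
apply: powR_mono; [by rewrite invr_ge0 ltW | exact: powR_ge0 |].
rewrite (bigD1 i) //= lerDl sumr_ge0 // => j _; exact: powR_ge0.
Qed.

Lemma qn_bound q n (v : 'cV[R]_n) (B : R) : (1 <= q)%E -> 0 <= B ->
  (forall i, `|v i 0| <= B) -> qnorm q v <= pow_inv n q * B.
Proof.
move=> /qcase [->|[p [-> p1]]] B0 h /=; first by rewrite mul1r; apply: bigmax_le.
have p0 : 0 < p by apply: lt_le_trans p1.
rewrite -{1}(@powRr1 _ B) // -[in B `^ _](@mulfV _ p) ?gt_eqF // powRrM -powRM ?powR_ge0 //.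
apply: powR_mono; [by rewrite invr_ge0 ltW | exact: sumpow_ge0 |].
rewrite mulr_natl -[in X in _ <= X](card_ord n) -sumr_const; apply: ler_sum => i _.
by apply: powR_mono; rewrite // ltW.
Qed.


Lemma qn_scale q n (v : 'cV[R]_n) (a : R) : (1 <= q)%E -> 0 <= a ->
  qnorm q (a *: v) <= a * qnorm q v.
Proof.
move=> /qcase [->|[p [-> p1]]] a0 /=.
  apply: bigmax_le; first by rewrite mulr_ge0 ?cmax_ge0.
  by move=> i _; rewrite mxE normrM ger0_norm // ler_wpM2l // le_cmax.
have p0 : 0 < p by apply: lt_le_trans p1.
rewrite le_eqVlt; apply/orP; left; apply/eqP.
under eq_bigr do rewrite mxE normrM ger0_norm // powRM //.
rewrite -mulr_sumr powRM ?powR_ge0 ?sumpow_ge0 // -powRrM mulfV ?gt_eqF //.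
by rewrite powRr1.
Qed.

Lemma qn0 q n : (1 <= q)%E -> qnorm q (0 : 'cV[R]_n) = 0.
Proof.
move=> q1; apply/eqP; rewrite eq_le qn_ge0 andbT.
have := @qn_bound q n 0 0 q1 (lexx _); rewrite mulr0; apply.
by move=> i; rewrite mxE normr0.
Qed.

Lemma pinv_ge0 n (q : \bar R) : 0 <= pow_inv n q.
Proof. by case: q => [p||] //=; rewrite powR_ge0. Qed.

Lemma pinv_le m W (q : \bar R) : (1 <= q)%E -> (0 < W)%N -> (m <= W)%N -> pow_inv m q <= W%:R.
Proof.
move=> /qcase [->|[p [-> p1]]] W0 mW /=; first by rewrite ler1n.
have p0 : 0 < p by apply: lt_le_trans p1.
apply: le_trans (_ : m%:R <= W%:R); last by rewrite ler_nat.
case: m mW => [|m] mW; first by rewrite powR0 // invr_eq0 gt_eqF.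
apply: ler1_powR; first by rewrite ler1n.
by rewrite invf_le1.
Qed.


Lemma qn_holder q m n W (v : 'cV[R]_n) : (1 <= q)%E -> (m <= W)%N -> (n <= W)%N ->
  pow_inv m q * \sum_(j < n) `|v j 0| <= W%:R * qnorm q v.
Proof.
move=> /qcase [->|[p [-> p1]]] mW nW /=.
  rewrite mul1r; apply: le_trans (_ : \sum_(j < n) \big[Num.max/0]_(i < n) `|v i 0| <= _).
    by apply: ler_sum => j _; apply: le_cmax.
  rewrite sumr_const card_ord -[_ *+ n]mulr_natl; apply: ler_wpM2r; first exact: cmax_ge0.
  by rewrite ler_nat.
have p0 : 0 < p by apply: lt_le_trans p1.
have ip1 : 0 <= 1 - p^-1 by rewrite subr_ge0 invf_le1.
apply: le_trans (ler_wpM2l (powR_ge0 _ _) (snorm_holder v p1)) _.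
rewrite mulrA; apply: ler_wpM2r; first by rewrite powR_ge0.
have e : p^-1 + (1 - p^-1) = 1 by rewrite addrC subrK.
have hW : W%:R `^ p^-1 * W%:R `^ (1 - p^-1) = W%:R :> R.
  by rewrite -powRD; [rewrite e powRr1 | rewrite e oner_eq0].
rewrite -hW.
apply: ler_pM; rewrite ?powR_ge0 //; apply: powR_mono;
  by rewrite ?invr_ge0 ?ler0n ?ler_nat ?(ltW p0).
Qed.

Lemma qn_pert q m n W (M : 'M[R]_(m, n)) (v : 'cV[R]_n) (eta : R) :
  (1 <= q)%E -> 0 <= eta -> (forall i j, `|M i j| <= eta) ->
  (m <= W)%N -> (n <= W)%N ->
  qnorm q (M *m v) <= W%:R * eta * qnorm q v.
Proof.
move=> q1 e0 hM mW nW.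
have S0 : 0 <= \sum_(j < n) `|v j 0| by rewrite sumr_ge0.
apply: le_trans (@qn_bound q m (M *m v) (eta * \sum_(j < n) `|v j 0|) q1 _ _) _.
- exact: mulr_ge0.
- move=> i; rewrite mxE mulr_sumr; apply: le_trans (ler_norm_sum _ _ _) _.
  apply: ler_sum => j _; rewrite normrM; apply: ler_wpM2r => //.
- rewrite mulrCA (mulrC _ eta) -mulrA; apply: ler_wpM2l => //.
  exact: qn_holder.
Qed.


Lemma qn_opp q n (v : 'cV[R]_n) : (1 <= q)%E -> qnorm q (- v) = qnorm q v.
Proof.
move=> q1; apply/eqP; rewrite eq_le !qn_mono // => i; by rewrite mxE normrN.
Qed.

Lemma qn_eq0 q n (v : 'cV[R]_n) : (1 <= q)%E -> qnorm q v = 0 -> v = 0.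
Proof.
move=> q1 h; apply/matrixP => i j; rewrite (ord1 j) mxE; apply/normr0_eq0.
apply/eqP; rewrite eq_le normr_ge0 andbT -h; exact: qn_coord.
Qed.

Lemma qn_op q m n (M : 'M[R]_(m, n)) (v : 'cV[R]_n) : (1 <= q)%E ->
  qnorm q (M *m v) <= opnorm q M * qnorm q v.
Proof.
move=> q1.
set S := [set qnorm q (M *m w) | w in [set w : 'cV[R]_n | qnorm q w <= 1]].
have hub : has_ubound S.
  exists (pow_inv m q * \sum_(i < m) \sum_(j < n) `|M i j|) => _ [w /= w1 <-].
  apply: qn_bound => //; first by rewrite sumr_ge0 // => i _; rewrite sumr_ge0.
  move=> i; rewrite mxE; apply: le_trans (ler_norm_sum _ _ _) _.
  rewrite (bigD1 i) //=; apply: le_trans (_ : _ <= \sum_(j < n) `|M i j|) _; last first.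
    by rewrite lerDl sumr_ge0 // => k _; rewrite sumr_ge0.
  apply: ler_sum => j _; rewrite normrM -{2}(mulr1 `|M i j|).
  apply: ler_wpM2l => //; apply: le_trans w1; exact: qn_coord.
have [s0|s0] := eqVneq (qnorm q v) 0.
  by rewrite s0 mulr0 (qn_eq0 q1 s0) mulmx0 qn0.
have sp : 0 < qnorm q v by rewrite lt0r s0 qn_ge0.
pose w := (qnorm q v)^-1 *: v.
have w1 : qnorm q w <= 1.
  apply: le_trans (qn_scale _ q1 _) _; first by rewrite invr_ge0 ltW.
  by rewrite mulVf.
have hw : qnorm q (M *m w) <= opnorm q M by apply: ub_le_sup => //; exists w.
have -> : M *m v = qnorm q v *: (M *m w).
  by rewrite /w scalemxAr scalerA divff // scale1r.
apply: le_trans (qn_scale _ q1 (ltW sp)) _.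
by rewrite [X in _ <= X]mulrC; apply: ler_wpM2l => //; exact: ltW.
Qed.


Lemma relu_sc (a b : R) : `|Num.max a 0 - Num.max b 0| <= `|a - b|.
Proof.
have h1 := ler_norm (a - b).
have h2 : b - a <= `|a - b| by rewrite -normrN opprB ler_norm.
rewrite ler_norml; apply/andP.
have [ha|ha] := leP a 0; have [hb|hb] := leP b 0;
  rewrite ?(max_r ha) ?(max_r hb) ?(max_l (ltW ha)) ?(max_l (ltW hb)); split; lra.
Qed.

Lemma relu_sc0 (a : R) : `|Num.max a 0| <= `|a|.
Proof. by have := relu_sc a 0; rewrite (@max_r _ _ 0 0) // !subr0. Qed.

Lemma relu_le q n (u : 'cV[R]_n) : (1 <= q)%E -> qnorm q (relu u) <= qnorm q u.
Proof. by move=> q1; apply: qn_mono => // i; rewrite mxE relu_sc0. Qed.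

Lemma relu_lip q n (u v : 'cV[R]_n) : (1 <= q)%E ->
  qnorm q (relu u - relu v) <= qnorm q (u - v).
Proof. by move=> q1; apply: qn_mono => // i; rewrite !mxE relu_sc. Qed.

End S.

Section Net.
Variables (R : realType) (L : nat) (N : nat -> nat).

Lemma getW_ord (th : params R L N) (l : 'I_L) : getW th l = (th l).1.
Proof.
case: l => m hm; rewrite /getW /=.
move: (erefl (m < L)%N); rewrite {2 3}hm => e.
by rewrite (bool_irrelevance e hm).
Qed.

Lemma getb_ord (th : params R L N) (l : 'I_L) : getb th l = (th l).2.
Proof.
case: l => m hm; rewrite /getb /=.
move: (erefl (m < L)%N); rewrite {2 3}hm => e.
by rewrite (bool_irrelevance e hm).
Qed.

End Net.

Lemma eq_le_ (R : realType) (x y : R) : x = y -> x <= y.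
Proof. by move=> ->. Qed.

Lemma num_step (R : realType) (r dl c A T P K ey s E : R) :
  1 <= r -> 0 <= dl -> dl <= r -> c = A + 1 -> 0 <= A -> 1 <= P -> P <= 2 * r * T ->
  0 <= T -> 1 <= K -> 0 <= ey -> ey <= dl * c * T * K ^+ 2 -> s <= P * (A + K) ->
  E <= (r + dl) * ey + dl * s + dl ->
  E <= dl * c * (2 * r * T) * (K + 1) ^+ 2.
Proof.
move=> r1 d0 dr cA A0 P1 PT T0 K1 ey0 eyB sB EB.
have c1 : 1 <= c by rewrite cA lerDr.
have h1 : (r + dl) * ey <= (2 * r) * (dl * c * T * K ^+ 2).
  apply: ler_pM; rewrite ?addr_ge0 //; try lra.
have h2 : dl * s <= dl * (P * (A + K)) by apply: ler_wpM2l.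
have h3 : P * (A + K) + 1 <= c * (2 * r * T) * (K + 1).
  have : P * (A + K) + 1 <= P * (c + K) by rewrite cA; nra.
  move=> /le_trans; apply.
  have : c + K <= c * (K + 1) by nra.
  have PT0 : 0 <= P by lra.
  move=> h; apply: le_trans (ler_wpM2l PT0 h) _.
  have cK : 0 <= c * (K + 1) by apply: mulr_ge0; lra.
  nra.
have h4 : dl * (P * (A + K)) + dl <= dl * (c * (2 * r * T) * (K + 1)).
  by have := ler_wpM2l d0 h3; rewrite mulrDr mulr1.
have X0 : 0 <= dl * c * (2 * r * T) by rewrite !mulr_ge0 //; lra.
have h5 : K ^+ 2 + (K + 1) <= (K + 1) ^+ 2 by rewrite !expr2; nra.
have := ler_wpM2l X0 h5.
rewrite mulrDr => h6.
apply: le_trans EB _; apply: le_trans h6.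
rewrite -!addrA; apply: lerD; first by apply: le_trans h1 _; apply/eq_le_; ring.
apply: le_trans (lerD h2 (lexx dl)) _; apply: le_trans h4 _.
by apply/eq_le_; ring.
Qed.

Theorem mainTheorem5 (R : realType) (L : nat) (N : nat -> nat)
  (D : R) (q : \bar R) (r eps eta : R)
  (Q : params R L N -> params R L N) :
  (0 < L)%N ->
  0 < D ->
  (1 <= q)%E ->
  1 <= r ->
  let d := N 0%N in
  let c := D * pow_inv d q + 1 in
  let W := width L N in
  0 < eps ->
  eps < c * (L%:R) ^+ 2 * (2 * r) ^+ L.-1 ->
  0 < eta ->
  eta <= eps / (c * W%:R * (L%:R) ^+ 2 * (2 * r) ^+ L.-1) ->
  (forall th, ball_params q r th -> param_supnorm (param_sub (Q th) th) <= eta) ->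
  forall th, ball_params q r th ->
  forall x : 'cV[R]_d, (forall i, - D <= x i 0 <= D) ->
  qnorm q (realization th x - realization (Q th) x) <= eps.
Proof.
move=> L0 D0 q1 r1 d c W e0 eL eta0 etaB hQ th hth x hx.
have hS := hQ th hth.
set th' := Q th in hS *.
have r0 : 0 < r by apply: lt_le_trans r1; exact: ltr01.
rewrite /param_supnorm in hS.
have hWe : forall l : 'I_L, forall i j, `|(th' l).1 i j - (th l).1 i j| <= eta.
  move=> l i j; apply: le_trans hS.
  apply: (bigmax_sup l) => //; rewrite le_max; apply/orP; left.
  apply: (bigmax_sup i) => //; apply: (bigmax_sup j) => //.
  by rewrite /param_sub /= !mxE lexx.
have hbe : forall l : 'I_L, forall i, `|(th' l).2 i 0 - (th l).2 i 0| <= eta.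
  move=> l i; apply: le_trans hS.
  apply: (bigmax_sup l) => //; rewrite le_max; apply/orP; right.
  apply: (bigmax_sup i) => //.
  by rewrite /param_sub /= !mxE lexx.
have hWl : forall l : 'I_L, (N l <= W)%N /\ (N l.+1 <= W)%N.
  move=> l; rewrite /W /width; split.
  - exact: (@leq_bigmax _ (fun i : 'I_L.+1 => N i) (widen_ord (leqnSn L) l)).
  - exact: (@leq_bigmax _ (fun i : 'I_L.+1 => N i) (Ordinal (ltn_ord l : (l.+1 < L.+1)%N))).
have W0 : (0 < W)%N.
  rewrite lt0n; apply/negP => /eqP W0; move: etaB.
  rewrite W0 mulr0 !mul0r invr0 mulr0 => h.
  by have := lt_le_trans eta0 h; rewrite ltxx.
set A := D * pow_inv d q.
have A0 : 0 <= A by rewrite mulr_ge0 ?pinv_ge0 // ltW.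
have cA : c = A + 1 by [].
have c1 : 1 <= c by rewrite cA lerDr.
set dl := W%:R * eta.
have dl0 : 0 <= dl by rewrite mulr_ge0 // ltW.
set Den := c * L%:R ^+ 2 * (2 * r) ^+ L.-1.
have Den0 : 0 < Den.
  rewrite /Den !mulr_gt0 ?exprn_gt0 ?ltr0n //; lra.
have hE : dl * Den <= eps.
  have den0 : 0 < c * W%:R * L%:R ^+ 2 * (2 * r) ^+ L.-1.
    rewrite !mulr_gt0 ?exprn_gt0 ?ltr0n //; lra.
  move: etaB; rewrite ler_pdivlMr // => h; apply: le_trans h.
  by apply/eq_le_; rewrite /dl /Den; ring.
have dl1 : dl < 1.
  have : dl * Den < 1 * Den by rewrite mul1r; apply: le_lt_trans eL.
  by rewrite ltr_pM2r.
have dlr : dl <= r by lra.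
have hpert : forall l : 'I_L, forall v : 'cV[R]_(N l),
    qnorm q (((th' l).1 - (th l).1) *m v) <= dl * qnorm q v.
  move=> l v; have [h1 h2] := hWl l.
  apply: qn_pert => //; first exact: ltW.
  by move=> i j; rewrite !mxE; apply: hWe.
have hbias : forall l : 'I_L, qnorm q ((th l).2 - (th' l).2) <= dl.
  move=> l; have [h1 h2] := hWl l.
  apply: le_trans (@qn_bound _ q _ _ eta q1 (ltW eta0) _) _.
    by move=> i; rewrite !mxE distrC; apply: hbe.
  by rewrite /dl; apply: ler_wpM2r; [exact: ltW | exact: pinv_le].
pose y (t : params R L N) k : 'cV[R]_(N k) :=
  if k == 0%N then pre t x k else relu (pre t x k).
have preS : forall t k, pre t x k.+1 = getW t k *m y t k + getb t k by [].
have hs : forall k, (k < L)%N -> qnorm q (y th k) <= r ^+ k * (A + k%:R).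
  elim=> [|k IH] hk.
    rewrite /y /= expr0 mul1r addr0 /A mulrC.
    apply: qn_bound => //; first exact: ltW.
    by move=> i; rewrite ler_norml hx.
  have hk' : (k < L)%N by apply: ltnW.
  rewrite /y /=; apply: le_trans (relu_le _ q1) _.
  rewrite -/(y th k).
  have -> : getW th k = (th (Ordinal hk')).1 := getW_ord th (Ordinal hk').
  have -> : getb th k = (th (Ordinal hk')).2 := getb_ord th (Ordinal hk').
  have [hop hb] := hth (Ordinal hk').
  have h1 := qn_op (th (Ordinal hk')).1 (y th k) q1.
  have hs0 := qn_ge0 q (y th k).
  have IH' := IH hk'.
  have P1 : 1 <= r ^+ k by apply: exprn_ege1.
  apply: le_trans (qn_tri _ _ q1) _.
  rewrite exprS -natr1.
  have k0 : 0 <= k%:R :> R by [].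
  nra.
have step : forall k (hk : (k < L)%N),
    qnorm q (pre th x k.+1 - pre th' x k.+1) <=
    (r + dl) * qnorm q (y th k - y th' k) + dl * qnorm q (y th k) + dl.
  move=> k hk; rewrite !preS.
  have -> : getW th k = (th (Ordinal hk)).1 := getW_ord th (Ordinal hk).
  have -> : getb th k = (th (Ordinal hk)).2 := getb_ord th (Ordinal hk).
  have -> : getW th' k = (th' (Ordinal hk)).1 := getW_ord th' (Ordinal hk).
  have -> : getb th' k = (th' (Ordinal hk)).2 := getb_ord th' (Ordinal hk).
  have [hop hb] := hth (Ordinal hk).
  have hp := hpert (Ordinal hk); have hbb := hbias (Ordinal hk).
  move: hop hb hp hbb.
  set M := (th (Ordinal hk)).1; set M' := (th' (Ordinal hk)).1.
  set b := (th (Ordinal hk)).2; set b' := (th' (Ordinal hk)).2.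
  set u := y th k; set u' := y th' k => hop hb hp hbb.
  have -> : M *m u + b - (M' *m u' + b') = (M *m u - M' *m u') + (b - b').
    by rewrite opprD addrACA.
  have -> : M *m u - M' *m u' = M' *m (u - u') - (M' - M) *m u.
    by rewrite mulmxBr mulmxBl opprB [RHS]addrC [RHS]addrA subrK.
  have e1 : M' *m (u - u') = M *m (u - u') + (M' - M) *m (u - u').
    by rewrite [in RHS]mulmxBl [RHS]addrC subrK.
  have t1 := qn_tri (M *m (u - u')) ((M' - M) *m (u - u')) q1.
  have t2 := qn_op M (u - u') q1.
  have t3 := hp (u - u').
  have t4 := hp u.
  have t5 := qn_tri (M' *m (u - u') - (M' - M) *m u) (b - b') q1.
  have t6 := qn_tri (M' *m (u - u')) (- ((M' - M) *m u)) q1.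
  rewrite qn_opp // in t6.
  rewrite -e1 in t1.
  have g0 := qn_ge0 q (u - u').
  apply: le_trans t5 _.
  nra.
have he : forall k, (k < L)%N ->
    qnorm q (pre th x k.+1 - pre th' x k.+1) <= dl * c * (2 * r) ^+ k * (k.+1%:R) ^+ 2.
  elim=> [|k IH] hk.
    have := step 0%N hk; rewrite /y /= subrr qn0 // mulr0 add0r.
    have := hs 0%N hk; rewrite expr0 mul1r addr0 => h0 h.
    apply: le_trans h _; rewrite expr0 mulr1 expr1n mulr1 cA.
    nra.
  have hk' : (k < L)%N by apply: ltnW.
  have hy : qnorm q (y th k.+1 - y th' k.+1) <= qnorm q (pre th x k.+1 - pre th' x k.+1).
    exact: relu_lip.
  have := IH hk'; have := step k.+1 hk; have := hs k.+1 hk.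
  move=> h1 h2 h3.
  rewrite exprS -[k.+2%:R]natr1.
  apply: (@num_step R r dl c A ((2 * r) ^+ k) (r ^+ k.+1) (k.+1%:R)
     (qnorm q (y th k.+1 - y th' k.+1)) (qnorm q (y th k.+1))) => //.
  - by apply: exprn_ege1.
  - rewrite exprS; apply: ler_pM; rewrite ?exprn_ge0; try lra.
    by apply: lerXn2r; rewrite ?nnegrE; lra.
  - by apply: exprn_ge0; lra.
  - by rewrite ler1n.
  - exact: qn_ge0.
  - exact: le_trans hy h3.
have := he L.-1; rewrite prednK // => /(_ (leqnn L)) h.
apply: le_trans h _; apply: le_trans hE.
by apply/eq_le_; rewrite /Den; ring.
Qed.
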